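(* Let $k\ge2$ be an integer and let $H_k$ be the graph with half-edges obtained from $K_{k,k}$ by deleting one vertex but keeping its $k$ incident edges as half-edges. Let $e\ne e'$ be two half-edges of $H_k$ with end vertices $x$ and $x'$ respectively. Then for every positive integer $q$, $H_k$ admits a $(q(k+1)+1,q)$-total colouring $\gamma$ such that $\gamma(e)=0$, $\gamma(e')=2$, $\gamma(x)=qk+1$ and $\gamma(x')=q+2$.
   Context: A half-edge has exactly one end vertex. For integers $p\ge q\ge1$, a $(p,q)$-total colouring of a graph (possibly with half-edges) is a map $c$ from the set of vertices, edges and half-edges to $\{0,1,\ldots,p-1\}$ such that $q\le|c(a)-c(b)|\le p-q$ whenever $a,b$ are two adjacent vertices, two edges/half-edges sharing an end vertex, or a vertex and an edge or half-edge incident with it. *)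

(* Defs.v *)
From mathcomp Require Import all_boot.
Set Implicit Arguments. Unset Strict Implicit. Unset Printing Implicit Defensive.

(* A graph possibly with half-edges: a finite vertex type V, a finite type E
   of edges and half-edges, and for each f : E its set of end vertices
   (two ends for an edge, one end for a half-edge). *)

Definition ndist (a b : nat) : nat := (a - b) + (b - a).

Definition tadj (V E : finType) (ends : E -> {set V}) (a b : V + E) : bool :=
  match a, b with
  | inl u, inl v => (u != v) && [exists f, ends f == [set u; v]]
  | inr f, inr g => (f != g) && (ends f :&: ends g != set0)
  | inl v, inr f => v \in ends f
  | inr f, inl v => v \in ends f
  end.

Definition total_colouring (V E : finType) (ends : E -> {set V})
    (p q : nat) (c : V + E -> nat) : Prop :=
  (forall a, c a < p) /\
  (forall a b, tadj ends a b -> q <= ndist (c a) (c b) <= p - q).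

(* H_k: K_{k,k} with parts A = inl 'I_k and B = inr 'I_k; the vertex inr d
   is deleted, and its k incident edges are kept as half-edges. *)
Definition HkV (k : nat) (d : 'I_k) := {v : 'I_k + 'I_k | v != inr d}.
Definition HkE (k : nat) := ('I_k * 'I_k)%type.
Definition Hk_ends (k : nat) (d : 'I_k) (f : HkE k) : {set HkV d} :=
  [set v : HkV d | (val v == inl f.1) || (val v == inr f.2)].

(* Main.v *)
Require Import Defs.
From mathcomp Require Import all_boot zify.
From mathcomp Require Import fingroup perm.
Set Implicit Arguments. Unset Strict Implicit. Unset Printing Implicit Defensive.
Definition good (k t d t' d' : nat) : Prop :=
  t <> t' /\ t <= k /\ t' <= k /\ d <= 2 /\ d' <= 2 /\
  (t' = t + 1 -> d <= d') /\ (t = t' + 1 -> d' <= d) /\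
  (t' = t + k -> d' <= d + 1) /\ (t = t' + k -> d <= d' + 1) /\ t + d <> t' + d'.
Definition wr (p u : nat) := if u == p then 0 else u.

Lemma good_sym k t d t' d' : good k t d t' d' -> good k t' d' t d.
Proof. rewrite /good; lia. Qed.

Lemma raw_lt q k t d t' d' : 0 < q -> t < t' -> good k t d t' d' ->
  q <= ndist (q*t+d) (q*t'+d') <= q*(k+1)+1 - q.
Proof.
move=> hq htt [h0 [ht [ht' [hd [hd' [h1 [h2 [h3 [h4 h5]]]]]]]]].
have [m em] : exists m, t' = t + m.+1 by exists (t' - t).-1; lia.
subst t'.
rewrite mulnDr /ndist.
have E1 : q * m.+1 = q * m + q by rewrite mulnS addnC.
have Ek : q * (k+1) = q*k + q by rewrite mulnDr muln1.
have F2 : q * m.+1 <= q * k by rewrite leq_pmul2l //; lia.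
have F3 : m.+2 <= k -> q * m.+2 <= q * k by move=> h; rewrite leq_pmul2l.
have E2 : q * m.+2 = q * m + q + q by rewrite !mulnS; lia.
have F4 : 1 <= m -> q <= q * m by move=> h; rewrite -{1}(muln1 q) leq_pmul2l.
have F6 : q = 1 -> q * m = m by move=> ->; rewrite mul1n.
have F7 : m = 0 -> q * m = 0 by move=> ->; rewrite muln0.
lia.
Qed.

Lemma raw_ok q k t d t' d' : 0 < q -> good k t d t' d' ->
  q <= ndist (q*t+d) (q*t'+d') <= q*(k+1)+1 - q.
Proof.
move=> hq hg; have [h|h] : t < t' \/ t' < t by case: hg; lia.
  exact: raw_lt.
rewrite /ndist addnC; apply: (raw_lt hq h); exact: good_sym.
Qed.

Lemma raw_le q k t d : 0 < q -> t <= k -> d <= 2 -> q*t+d <= q*(k+1)+1.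
Proof.
move=> hq ht hd; have : q * t <= q * k by rewrite leq_pmul2l.
have Ek : q * (k+1) = q*k + q by rewrite mulnDr muln1.
lia.
Qed.

Lemma wr_ok p q u v : 0 < q -> u <= p -> v <= p -> q <= ndist u v <= p - q ->
  q <= ndist (wr p u) (wr p v) <= p - q.
Proof. rewrite /wr /ndist => hq hu hv; case: eqP; case: eqP; lia. Qed.

Lemma fin_ok q k t d t' d' : 0 < q -> good k t d t' d' ->
  q <= ndist (wr (q*(k+1)+1) (q*t+d)) (wr (q*(k+1)+1) (q*t'+d')) <= q*(k+1)+1 - q.
Proof.
move=> hq hg; have hg' := hg; case: hg' => [_ [ht [ht' [hd [hd' _]]]]].
apply: wr_ok => //; [exact: raw_le | exact: raw_le | exact: raw_ok].
Qed.
Definition slotA k a := if a == 0 then k else a.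
Definition dA (a : nat) := if a == 0 then 1 else 2.
Definition slotE k a c := if a + c < k then a+c+1 else a+c+1-k.
Definition dE k a c := if c+2 <= slotE k a c then 2 else 1.
Definition dH (a : nat) := if a==0 then 0 else if a==1 then 2 else 1.
Ltac crush := rewrite /good /dE /slotA /slotE /dA /dH; repeat case: ifP; move=> *; lia.
Lemma gAB k a : 2<=k -> a<k -> good k (slotA k a) (dA a) 0 1.
Proof. move=> *. crush. Qed.
Lemma gAH k a : 2<=k -> a<k -> good k (slotA k a) (dA a) 0 (dH a).
Proof. move=> *. crush. Qed.
Lemma gAE k a c : 2<=k -> a<k -> c < k-1 -> good k (slotA k a) (dA a) (slotE k a c) (dE k a c).
Proof. move=> *. crush. Qed.
Lemma gBE k a c : 2<=k -> a<k -> c < k-1 -> good k 0 1 (slotE k a c) (dE k a c).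
Proof. move=> *. crush. Qed.
Lemma gHE k a c : 2<=k -> a<k -> c < k-1 -> good k 0 (dH a) (slotE k a c) (dE k a c).
Proof. move=> *. crush. Qed.
Lemma gEEr k a c c' : 2<=k -> a<k -> c < k-1 -> c' < k-1 -> c <> c' -> good k (slotE k a c) (dE k a c) (slotE k a c') (dE k a c').
Proof. move=> *. crush. Qed.
Lemma gEEc k a a' c : 2<=k -> a<k -> a' < k -> c < k-1 -> a <> a' -> good k (slotE k a c) (dE k a c) (slotE k a' c) (dE k a' c).
Proof. move=> *. crush. Qed.
Lemma bnd k a c : 2<=k -> a < k -> c < k-1 ->
  [/\ slotA k a <= k, dA a <= 2, dH a <= 2, slotE k a c <= k & dE k a c <= 2].
Proof. move=> *. rewrite /dE /slotA /slotE /dA /dH; repeat case: ifP; move=> *; split; lia. Qed.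

Definition sdv k (d:'I_k) (A : 'I_k -> nat) (v : HkV d) : nat * nat :=
  match val v with inl i => (slotA k (A i), dA (A i)) | inr _ => (0,1) end.
Definition sde k (d:'I_k) (A B : 'I_k -> nat) (f : HkE k) : nat * nat :=
  if f.2 == d then (0, dH (A f.1)) else (slotE k (A f.1) (B f.2), dE k (A f.1) (B f.2)).
Definition sd k (d:'I_k) (A B : 'I_k -> nat) (z : HkV d + HkE k) :=
  match z with inl v => sdv A v | inr f => sde d A B f end.

Section Adj.
Variables (k : nat) (d : 'I_k) (A B : 'I_k -> nat).
Hypotheses (hk : 2 <= k) (hA : forall i, A i < k) (iA : injective A)
  (hB : forall j, B j < k) (iB : injective B) (hBd : B d = k-1).

Lemma hBj j : j != d -> B j < k-1.
Proof.
move=> hj; have := hB j; have : B j <> B d by move=> /iB E; rewrite E eqxx in hj.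
rewrite hBd; lia.
Qed.

Definition G z w := good k (@sd k d A B z).1 (@sd k d A B z).2 (@sd k d A B w).1 (@sd k d A B w).2.

Lemma G_sym z w : G z w -> G w z.
Proof. exact: good_sym. Qed.

Lemma adj_vv u v : tadj (@Hk_ends k d) (inl u) (inl v) -> G (inl u) (inl v).
Proof.
rewrite /= => /andP [huv /existsP [f /eqP hf]].
have hu : u \in Hk_ends d f by rewrite hf !inE eqxx.
have hv : v \in Hk_ends d f by rewrite hf !inE eqxx orbT.
move: hu hv huv; clear hf; case: u => [[i|j] hu]; case: v => [[i'|j'] hv]; rewrite /Hk_ends !inE /=.
- move=> /orP[/eqP[E1]|//] /orP[/eqP[E2]|//] H; exfalso; move: H; rewrite -val_eqE /= E1 E2 eqxx //.
- by move=> _ _ _; rewrite /G /=; apply: gAB.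
- by move=> _ _ _; rewrite /G /=; apply: good_sym; apply: gAB.
- move=> /eqP[E1] /eqP[E2] H; exfalso; move: H; rewrite -val_eqE /= E1 E2 eqxx //.
Qed.

Lemma adj_ve v g : tadj (@Hk_ends k d) (inl v) (inr g) -> G (inl v) (inr g).
Proof.
rewrite /= /Hk_ends inE; case: v => [[i|j] hv] /=.
- move=> /orP[/eqP[->]|//]; rewrite /G /= /sde; case: eqP => g2d /=.
    exact: gAH.
  apply: gAE => //; apply: hBj; exact/eqP.
- move=> /eqP[E]; rewrite /G /= /sde; case: eqP => g2d /=.
    by rewrite E g2d eqxx in hv.
  apply: gBE => //; apply: hBj; exact/eqP.
Qed.

Lemma adj_ee f g : tadj (@Hk_ends k d) (inr f) (inr g) -> G (inr f) (inr g).
Proof.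
rewrite /= => /andP [hfg /set0Pn [w]]; rewrite inE => /andP [wf wg].
move: wf wg hfg; rewrite /Hk_ends !inE; case: w => [[i|j] hw] /=.
- move=> /orP[/eqP[E1]|//] /orP[/eqP[E2]|//] hfg.
  case: f g E1 E2 hfg => [f1 f2] [g1 g2] /= <- <- hfg.
  rewrite /G /= /sde /=; case: eqP => f2d; case: eqP => g2d /=.
  + by rewrite f2d g2d eqxx in hfg.
  + apply: gHE => //; apply: hBj; exact/eqP.
  + apply: good_sym; apply: gHE => //; apply: hBj; exact/eqP.
  + apply: gEEr => //; try (apply: hBj; exact/eqP).
    by move=> /iB E; rewrite E eqxx in hfg.
- move=> /eqP[E1] /eqP[E2] hfg.
  have jd : j != d by apply: contra hw => /eqP ->.
  case: f g E1 E2 hfg => [f1 f2] [g1 g2] /= <- <- hfg.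
  rewrite /G /= /sde /= (negbTE jd) /=.
  apply: gEEc => //; first exact: hBj.
  by move=> /iA E; rewrite E eqxx in hfg.
Qed.

Lemma adj_good z w : tadj (@Hk_ends k d) z w -> G z w.
Proof.
case: z => [u|f]; case: w => [v|g].
- exact: adj_vv.
- exact: adj_ve.
- move=> h; apply: G_sym; apply: adj_ve; exact: h.
- exact: adj_ee.
Qed.

Lemma sd_bnd z : (@sd k d A B z).1 <= k /\ (@sd k d A B z).2 <= 2.
Proof.
have h0 : 0 < k - 1 by lia.
case: z => [[[i|j] hv]|[f1 f2]] /=.
- by have [] := bnd hk (hA i) h0; move=> *; split.
- split; lia.
- rewrite /sde /=; case: eqP => f2d /=.
    by have [] := bnd hk (hA f1) h0; move=> *; split.
  have hc : B f2 < k - 1 by apply: hBj; exact/eqP.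
  by have [] := bnd hk (hA f1) hc; move=> *; split.
Qed.
End Adj.

Lemma half_end k (d:'I_k) (e : HkE k) (x : HkV d) :
  Hk_ends d e = [set x] -> e.2 = d /\ val x = inl e.1.
Proof.
move=> he.
have hin : forall y : HkV d, y \in Hk_ends d e -> y = x
  by move=> y; rewrite he inE => /eqP.
have hA : (inl e.1 : 'I_k + 'I_k) != inr d by [].
have ya := hin (exist _ (inl e.1) hA).
have vx : val x = inl e.1.
  by rewrite -ya // /Hk_ends inE /= eqxx.
split=> //; apply/eqP; apply/negPn/negP => h2.
have hB : (inr e.2 : 'I_k+'I_k) != inr d.
  by apply: contra h2 => /eqP [->].
have yb := hin (exist _ (inr e.2) hB).
have : val (exist (fun v => v != inr d) (inr e.2 : 'I_k + 'I_k) hB) = val x.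
  by rewrite yb // /Hk_ends inE /= eqxx.
by rewrite vx.
Qed.

Lemma exA k (i0 i1 o0 o1 : 'I_k) : i0 != i1 -> o0 != o1 ->
  exists f : 'I_k -> 'I_k, injective f /\ f i0 = o0 /\ f i1 = o1.
Proof.
move=> hi ho.
pose s1 := tperm i0 o0. pose s2 := tperm (s1 i1) o1.
exists (fun i => s2 (s1 i)); split; first by move=> a b /perm_inj /perm_inj.
have h1 : s1 i0 = o0 by rewrite tpermL.
have h2 : s1 i1 != o0 by rewrite -h1 (inj_eq perm_inj) eq_sym.
split; last by rewrite tpermL.
by rewrite h1 tpermD // eq_sym.
Qed.

Lemma exB k (d o : 'I_k) : exists f : 'I_k -> 'I_k, injective f /\ f d = o.
Proof. exists (tperm d o); split; [exact: perm_inj | exact: tpermL]. Qed.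

Theorem lemma7 (k : nat) (hk : 2 <= k) (d : 'I_k) (e e' : HkE k)
    (x x' : HkV d)
    (he : Hk_ends d e = [set x]) (he' : Hk_ends d e' = [set x'])
    (hee' : e != e') (q : nat) (hq : 0 < q) :
  exists c : HkV d + HkE k -> nat,
    total_colouring (@Hk_ends k d) (q * (k + 1) + 1) q c /\
    c (inr e) = 0 /\ c (inr e') = 2 /\
    c (inl x) = q * k + 1 /\ c (inl x') = q + 2.
Proof.
have [e2 vx] := half_end he.
have [e'2 vx'] := half_end he'.
have hi : e.1 != e'.1.
  apply: contra hee'; case: e e2 {he vx} => [a b]; case: e' e'2 {he' vx'} => [a' b'] /= -> -> /eqP -> //.
have k0 : 0 < k by lia.
have k1 : 1 < k by lia.
have km : k - 1 < k by lia.
pose o0 := Ordinal k0. pose o1 := Ordinal k1. pose om := Ordinal km.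
have [fA [iA [fA0 fA1]]] := @exA k e.1 e'.1 o0 o1 hi isT.
have [fB [iB fBd]] := exB d om.
pose A := fun i => val (fA i). pose B := fun j => val (fB j).
have hA : forall i, A i < k by move=> i; exact: ltn_ord.
have hB : forall j, B j < k by move=> j; exact: ltn_ord.
have iA' : injective A by move=> a b /val_inj /iA.
have iB' : injective B by move=> a b /val_inj /iB.
have hBd : B d = k - 1 by rewrite /B fBd.
have hA0 : A e.1 = 0 by rewrite /A fA0.
have hA1 : A e'.1 = 1 by rewrite /A fA1.
pose p := q * (k + 1) + 1.
exists (fun z => wr p (q * (@sd k d A B z).1 + (@sd k d A B z).2)).
split; first split.
- move=> z; have [h1 h2] := sd_bnd hk hA hB iB' hBd z.
  have := raw_le hq h1 h2; rewrite /wr -/p; case: eqP; lia.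
- move=> z w hzw; exact: (fin_ok hq (adj_good hk hA iA' hB iB' hBd hzw)).
have Ek : q * (k+1) = q*k + q by rewrite mulnDr muln1.
rewrite /= /sde /sdv e2 e'2 eqxx vx vx' /= hA0 hA1 /dH /slotA /dA /= /wr /p muln0 muln1.
repeat case: eqP; lia.
Qed.
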